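(* Let $n,k\ge1$, let $D=\{x\in\{0,\ldots,k-1\}^n:(\sum_i x_i)\bmod k=0\}$ and for $x\in D$ let $F(x)=\frac1k\big[(\sum_{i=1}^n x_i)\bmod 2k\big]\in\{0,1\}$. In the model where the $n$ parties share prior entanglement and communicate by classical broadcast, the communication complexity of computing $F(x)$ (on inputs $x\in D$, party $i$ holding $x_i$) is $O(n)$.
   Context: In the model with prior entanglement, the parties share an arbitrary entangled quantum state (e.g. the $n$-qubit state $(|0^n\rangle+|1^n\rangle)/\sqrt2$, one qubit per party), may perform local measurements depending on their inputs, and then broadcast classical bits; the communication complexity is the number of classical bits broadcast needed so that the parties can determine $F(x)$. *)

(* Defs.v *)
From HB Require Import structures.
From mathcomp Require Import all_boot all_order all_algebra.
From mathcomp Require Import complex.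
From mathcomp Require Import reals.
Set Implicit Arguments. Unset Strict Implicit. Unset Printing Implicit Defensive.
Import Order.TTheory GRing.Theory Num.Theory.
Local Open Scope ring_scope.

(* Party i (i : 'I_n) holds a local system C^d;
   the joint Hilbert space is C^(d^n), basis indexed by {ffun 'I_n -> 'I_d}. *)

Section Model.
Variables (C : numClosedFieldType) (n k d : nat).

Definition state := {ffun 'I_n -> 'I_d} -> C.

Definition apply_local (i : 'I_n) (M : 'M[C]_d) (psi : state) : state :=
  fun y => \sum_(a < d) M (y i) a * psi [ffun j => if j == i then a else y j].

Definition is_projector (P : 'M[C]_d) : Prop :=
  P *m P = P /\ forall a b, P b a = (P a b)^*.

(* At a node, party i performs the
   two-outcome projective measurement {P (x_i), 1 - P (x_i)} on its own share,
   where the projector depends on its input x_i and (through the position in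
   the tree) on the transcript so far; it broadcasts the outcome bit
   (true for P, false for 1 - P). *)
Inductive proto : Type :=
| Leaf of bool
| Node of 'I_n & ('I_k -> 'M[C]_d) & proto & proto.

Fixpoint valid (t : proto) : Prop :=
  match t with
  | Leaf _ => True
  | Node _ P t0 t1 => (forall a, is_projector (P a)) /\ valid t0 /\ valid t1
  end.

(* communication cost = number of broadcast bits in the worst case *)
Fixpoint depth (t : proto) : nat :=
  match t with
  | Leaf _ => 0
  | Node _ _ t0 t1 => (maxn (depth t0) (depth t1)).+1
  end.

(* Exact (zero-error) correctness: every transcript occurring with nonzero
   probability (i.e. nonzero unnormalized post-measurement state) ends in a leaf
   labelled by the correct value. *)
Fixpoint correct (t : proto) (psi : state) (x : {ffun 'I_n -> 'I_k}) (v : bool)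
  : Prop :=
  match t with
  | Leaf b => (exists y, psi y != 0) -> b = v
  | Node i P t0 t1 =>
      correct t0 (apply_local i (1%:M - P (x i)) psi) x v /\
      correct t1 (apply_local i (P (x i)) psi) x v
  end.

End Model.

Definition inD (n k : nat) (x : {ffun 'I_n -> 'I_k}) : bool :=
  ((\sum_(i < n) (x i : nat)) %% k == 0)%N.

Definition Fval (n k : nat) (x : {ffun 'I_n -> 'I_k}) : bool :=
  (((\sum_(i < n) (x i : nat)) %% (2 * k)) %/ k == 1)%N.

(* Main.v *)
Require Import Defs.
From HB Require Import structures.
From mathcomp Require Import all_boot all_order all_algebra.
From mathcomp Require Import complex.
From mathcomp Require Import reals.
From Stdlib Require Import FunctionalExtensionality.
From mathcomp Require Import ring.
Set Implicit Arguments. Unset Strict Implicit. Unset Printing Implicit Defensive.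
Import Order.TTheory GRing.Theory Num.Theory.
Local Open Scope ring_scope.

Section Proof.
Variables (C : numClosedFieldType) (n k : nat).
Hypotheses (n0 : (0 < n)%N) (k0 : (0 < k)%N).

Definition om : C := k.-root (-1).

Lemma omk : om ^+ k = -1.
Proof. by rewrite /om rootCK. Qed.

Lemma om_norm : `|om| = 1.
Proof.
apply/eqP; rewrite -(pexpr_eq1 k0) ?normr_ge0 // -normrX omk normrN normr1 //.
Qed.

Definition wf (a : 'I_k) : C := om ^+ a.

Lemma wf_norm a : `|wf a| = 1.
Proof. by rewrite /wf normrX om_norm expr1n. Qed.

Lemma wf_neq0 a : wf a != 0.
Proof. by rewrite -normr_eq0 wf_norm oner_eq0. Qed.

Lemma wf_conj a : (wf a)^* = (wf a)^-1.
Proof. by rewrite invC_norm wf_norm expr1n invr1 mul1r. Qed.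

Definition Pm (a : 'I_k) : 'M[C]_2 :=
  \matrix_(b, c) (if b == c then 2^-1 else if (b : nat) == 0%N then (wf a)^-1 / 2 else wf a / 2).

Lemma ord2P (b : 'I_2) : b = ord0 \/ b = ord_max.
Proof. case: b => [[|[|m]] H]; [left; exact: val_inj|right; exact: val_inj|by []]. Qed.

Lemma Pm_proj a : is_projector (Pm a).
Proof.
split.
  apply/matrixP => b c; rewrite !mxE !big_ord_recl big_ord0 !mxE /= addr0.
  have := wf_neq0 a; set w := wf a => w0.
  have e2 : (2 : C) != 0 by rewrite pnatr_eq0.
  case: (ord2P b) => ->; case: (ord2P c) => -> /=; rewrite /bump /=;
  field; rewrite ?e2 ?w0 //.
move=> b c; rewrite !mxE.
have e : (2^-1 : C)^* = 2^-1 by rewrite fmorphV rmorph_nat.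
have h1 : (wf a / 2)^* = (wf a)^-1 / 2 by rewrite rmorphM fmorphV rmorph_nat; congr (_ * _); exact: wf_conj.
have h2 : ((wf a)^-1 / 2)^* = wf a / 2 by rewrite -h1 conjCK.
case: (ord2P b) => ->; case: (ord2P c) => -> //=;
  rewrite ?e ?h1 ?h2 //.
Qed.

Definition stt (j : nat) (Q : 'I_n -> 'M[C]_2) : state C n 2 :=
  fun y => \sum_(z < 2) \prod_(i < n)
    (if (i < j)%N then Q i (y i) z else ((y i == z)%:R)).

Lemma stt_eq j Q Q' : (forall i : 'I_n, (i < j)%N -> Q i = Q' i) ->
  stt j Q = stt j Q'.
Proof.
move=> h; apply: functional_extensionality => y; rewrite /stt.
apply: eq_bigr => z _; apply: eq_bigr => i _.
by case: ifP => // /h ->.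
Qed.

Lemma apply_stt j Q (i : 'I_n) : nat_of_ord i = j ->
  apply_local i (Q i) (stt j Q) = stt j.+1 Q.
Proof.
move=> hij; apply: functional_extensionality => y; rewrite /apply_local /stt.
under eq_bigr => a _ do rewrite mulr_sumr.
rewrite exchange_big /=; apply: eq_bigr => z _.
subst j; rewrite (bigD1 i) //= ltnSn /=.
under eq_bigr => a _ do rewrite (bigD1 i) //= ltnn ffunE eqxx.
rewrite (bigD1 z) //= eqxx mul1r [X in _ + X]big1 ?addr0; last first.
  by move=> a /negbTE ->; rewrite mul0r mulr0.
congr (_ * _); apply: eq_bigr => l hl.
rewrite ffunE (negbTE hl) ltnS.
have -> : (l <= i)%N = (l < i)%N.
  by rewrite leq_eqVlt (_ : (nat_of_ord l == nat_of_ord i) = false) //; apply/negbTE.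
done.
Qed.

Variable x : {ffun 'I_n -> 'I_k}.

Definition Qb (b : 'I_n -> bool) (i : 'I_n) : 'M[C]_2 :=
  if b i then Pm (x i) else 1%:M - Pm (x i).

Definition cnt (j : nat) (b : 'I_n -> bool) : nat :=
  \sum_(i < n | (i < j)%N) ~~ b i.

Lemma cnt_step j b (i : 'I_n) : nat_of_ord i = j -> cnt j.+1 b = (cnt j b + ~~ b i)%N.
Proof.
move=> hij; rewrite /cnt (bigD1 i) /=; last by rewrite hij.
rewrite addnC; congr (_ + _)%N; apply: eq_bigl => l.
rewrite ltnS -hij leq_eqVlt.
case: (eqVneq l i) => [->|hl]; first by rewrite ltnn eqxx andbF.
by rewrite (_ : (nat_of_ord l == nat_of_ord i) = false) ?andbT //; exact: negbTE hl.
Qed.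

Fixpoint build (m j : nat) (par : bool) : proto C n k 2 :=
  match m with
  | 0 => @Leaf C n k 2 par
  | m'.+1 => @Node C n k 2 (insubd (Ordinal n0) j) Pm (build m' j.+1 (~~ par)) (build m' j.+1 par)
  end.

Lemma build_depth m j p : depth (build m j p) = m.
Proof. by elim: m j p => //= m IH j p; rewrite !IH maxnn. Qed.

Lemma build_valid m j p : valid (build m j p).
Proof. by elim: m j p => //= m IH j p; split; [exact: Pm_proj | split]. Qed.


Definition u (b : 'I_n -> bool) (i : 'I_n) : C := (if b i then 1 else -1) * wf (x i).

Lemma Qb_entry b i (a : 'I_2) : Qb b i a ord0 = u b i * Qb b i a ord_max.
Proof.
rewrite /Qb /u; have w0 := wf_neq0 (x i).
have e2 : (2 : C) != 0 by rewrite pnatr_eq0.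
case: (b i); case: (ord2P a) => ->; rewrite !mxE /=; field; by rewrite ?e2 ?w0.
Qed.


Lemma prod_u b : inD x ->
  \prod_i u b i = (-1) ^+ (cnt n b + (\sum_(i < n) (x i : nat)) %/ k).
Proof.
move=> hD; rewrite /u big_split /=.
have -> : \prod_(i < n) (if b i then 1 else -1 : C) = (-1)^+ cnt n b.
  have -> : cnt n b = (\sum_(i < n) ~~ b i)%N by apply: eq_bigl => i; rewrite ltn_ord.
  by rewrite -prodrXr; apply: eq_bigr => i _; case: (b i).
have -> : \prod_(i < n) wf (x i) = om ^+ (\sum_(i < n) (x i : nat)) by rewrite -prodrXr.
set m := (_ %/ k)%N.
have hS : (\sum_(i < n) (x i : nat) = m * k)%N by rewrite /m divnK.
by rewrite hS mulnC exprM omk -exprD.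
Qed.

Lemma Fval_odd : inD x -> Fval x = odd ((\sum_(i < n) (x i : nat)) %/ k).
Proof.
move=> hD; rewrite /Fval.
set m := ((\sum_(i < n) (x i : nat)) %/ k)%N.
have hS : (\sum_(i < n) (x i : nat) = m * k)%N by rewrite /m divnK.
rewrite hS -muln_modl mulnK // modn2.
by case: (odd m).
Qed.

Lemma final b y : inD x -> odd (cnt n b) != Fval x -> stt n (Qb b) y = 0.
Proof.
move=> hD hne; rewrite /stt.
under eq_bigr => z _ do under eq_bigr => i _ do rewrite ltn_ord.
rewrite big_ord_recl big_ord_recl big_ord0 addr0.
under eq_bigr => i _ do rewrite Qb_entry.
rewrite big_split /= prod_u // -signr_odd oddD -Fval_odd //.
have -> : odd (cnt n b) (+) Fval x = true by move: hne; case: (odd _); case: (Fval x).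
rewrite expr1 mulN1r.
set T := (X in - X + _); set T' := (X in _ + X).
have -> : T' = T by rewrite /T /T'; apply: eq_bigr => i _; congr (_ _ _); apply: val_inj.
by rewrite addNr.
Qed.


Lemma neq_i j (i : 'I_n) (l : 'I_n) : nat_of_ord i = j -> (l < j)%N -> (l == i) = false.
Proof.
move=> hi hl; apply/negbTE/eqP => e; move: hl; by rewrite e hi ltnn.
Qed.

Lemma main_ind : inD x -> forall m j b, (j + m = n)%N ->
  correct (build m j (odd (cnt j b))) (stt j (Qb b)) x (Fval x).
Proof.
move=> hD; elim=> [|m IH] j b hjm.
  rewrite addn0 in hjm; subst j => /= [[y hy]].
  case: (eqVneq (odd (cnt n b)) (Fval x)) => // h.
  by rewrite final ?eqxx in hy.
have hj : (j < n)%N by rewrite -hjm addnS ltnS leq_addr.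
rewrite /=; set i := insubd (Ordinal n0) j.
have hi : nat_of_ord i = j by rewrite val_insubd hj.
split.
  set b0 := fun l => if l == i then false else b l.
  have e1 : stt j (Qb b) = stt j (Qb b0).
    by apply: stt_eq => l hl; rewrite /Qb /b0 (neq_i hi hl).
  have e2 : 1%:M - Pm (x i) = Qb b0 i by rewrite /Qb /b0 eqxx.
  rewrite e1 e2 apply_stt //.
  have e3 : ~~ odd (cnt j b) = odd (cnt j.+1 b0).
    rewrite (cnt_step _ hi) /b0 eqxx addn1 /=.
    congr (~~ odd _); apply: eq_bigr => l hl; by rewrite (neq_i hi hl).
  by rewrite e3; apply: IH; rewrite addSnnS.
set b1 := fun l => if l == i then true else b l.
have e1 : stt j (Qb b) = stt j (Qb b1).
  by apply: stt_eq => l hl; rewrite /Qb /b1 (neq_i hi hl).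
have e2 : Pm (x i) = Qb b1 i by rewrite /Qb /b1 eqxx.
rewrite e1 e2 apply_stt //.
have e3 : odd (cnt j b) = odd (cnt j.+1 b1).
  rewrite (cnt_step _ hi) /b1 eqxx addn0 /=.
  congr (odd _); apply: eq_bigr => l hl; by rewrite (neq_i hi hl).
by rewrite e3; apply: IH; rewrite addSnnS.
Qed.

End Proof.

Theorem lemma1 (R : realType) :
  exists c : nat, forall n k : nat, (0 < n)%N -> (0 < k)%N ->
    exists (d : nat) (psi : state R[i] n d) (t : proto R[i] n k d),
      (exists y, psi y != 0) /\ valid t /\ (depth t <= c * n)%N /\
      forall x : {ffun 'I_n -> 'I_k}, inD x -> correct t psi x (Fval x).
Proof.
exists 1%N => n k n0 k0.
exists 2%N, (@stt R[i] n 0 (fun _ => 0)), (build R[i] k n0 n 0 false).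
split.
  exists [ffun => ord0]; rewrite /stt big_ord_recl big_ord_recl big_ord0 addr0.
  rewrite (eq_bigr (fun _ => 1)); last by move=> i _; rewrite ffunE eqxx.
  rewrite big1_eq.
  case: n n0 => // n' _; rewrite big_ord_recl ffunE /= mul0r addr0.
  exact: oner_neq0.
split; first exact: build_valid.
split; first by rewrite build_depth mul1n.
move=> x hD.
have h := main_ind R[i] n0 k0 hD (fun _ => true) (add0n n).
rewrite (_ : cnt 0 _ = 0%N) in h; last by rewrite /cnt big_pred0.
by rewrite (@stt_eq _ _ 0 (fun _ => 0) (Qb R[i] x (fun _ => true))).
Qed.
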